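(* Let $U\subseteq\mathbb{R}^4$ be open with coordinates $(x^1,x^2,x^3,x^4)$ and let $a,b,p,q,s$ be real constants with $a^2+b^2\neq0$. Consider the Lorentzian metric $$g=2\,dx^1dx^4+(dx^2)^2+(dx^3)^2+\Big(x^4\big(a(x^2)^2+b(x^3)^2\big)+p(x^2)^2+2qx^2x^3+s(x^3)^2\Big)(dx^4)^2$$ on $U$. Then $(U,g)$ belongs to class $\mathcal{A}$ (its Ricci tensor is a Killing tensor) if and only if $b=-a$.
   Context: A pseudo-Riemannian manifold belongs to Gray's class $\mathcal{A}$ if its Ricci tensor $\varrho$ is cyclic-parallel, $(\nabla_X\varrho)(Y,Z)+(\nabla_Y\varrho)(Z,X)+(\nabla_Z\varrho)(X,Y)=0$ for all vector fields $X,Y,Z$, equivalently $(\nabla_X\varrho)(X,X)=0$ for all $X$; $\nabla$ is the Levi-Civita connection. *)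

(* Defs.v *)
From HB Require Import structures.
From mathcomp Require Import all_boot all_order all_algebra.
From mathcomp Require Import all_classical all_reals all_analysis.
Set Implicit Arguments. Unset Strict Implicit. Unset Printing Implicit Defensive.
Import Order.TTheory GRing.Theory Num.Theory.
Import numFieldNormedType.Exports.
Local Open Scope classical_set_scope.
Local Open Scope ring_scope.

Section Geometry.
Variable R : realType.
Notation pt := 'rV[R]_4.

(* coordinate x^(i+1) of a point (0-based index i) *)
Definition coord (x : pt) (i : 'I_4) : R := x ord0 i.

Definition pd (f : pt -> R) (i : 'I_4) (x : pt) : R :=
  'D_(delta_mx ord0 i : pt) f x.

Definition christoffel (g : pt -> 'M[R]_4) (k i j : 'I_4) (x : pt) : R :=
  2^-1 * \sum_(l < 4) (invmx (g x)) k l *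
    (pd (fun y => g y j l) i x + pd (fun y => g y i l) j x
     - pd (fun y => g y i j) l x).

Definition ricci (g : pt -> 'M[R]_4) (i j : 'I_4) (x : pt) : R :=
  \sum_(k < 4) (pd (christoffel g k i j) k x - pd (christoffel g k i k) j x)
  + \sum_(k < 4) \sum_(l < 4)
      (christoffel g k k l x * christoffel g l i j x
       - christoffel g k j l x * christoffel g l i k x).

Definition nabla_ricci (g : pt -> 'M[R]_4) (k i j : 'I_4) (x : pt) : R :=
  pd (ricci g i j) k x
  - \sum_(l < 4) (christoffel g l k i x * ricci g l j x
                  + christoffel g l k j x * ricci g i l x).

Definition classA (U : set pt) (g : pt -> 'M[R]_4) : Prop :=
  forall x, U x -> forall i j k : 'I_4,
    nabla_ricci g k i j x + nabla_ricci g i j k x + nabla_ricci g j k i x = 0.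

(* The metric of the theorem (indices 0,1,2,3 stand for x^1,x^2,x^3,x^4):
   g = 2 dx^1 dx^4 + (dx^2)^2 + (dx^3)^2 + H (dx^4)^2 *)
Definition Hfun (a b p q s : R) (x : pt) : R :=
  coord x 3%:R * (a * coord x 1%:R ^+ 2 + b * coord x 2%:R ^+ 2)
  + p * coord x 1%:R ^+ 2 + 2 * q * coord x 1%:R * coord x 2%:R
  + s * coord x 2%:R ^+ 2.

Definition metric_ex (a b p q s : R) (x : pt) : 'M[R]_4 :=
  \matrix_(i < 4, j < 4)
    if ((i == 0 :> nat) && (j == 3 :> nat)) || ((i == 3 :> nat) && (j == 0 :> nat))
    then 1
    else if ((i == 1 :> nat) && (j == 1 :> nat)) || ((i == 2 :> nat) && (j == 2 :> nat))
    then 1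
    else if (i == 3 :> nat) && (j == 3 :> nat) then Hfun a b p q s x
    else 0.

End Geometry.

(* Main.v *)
Require Import Defs.
From HB Require Import structures.
From mathcomp Require Import all_boot all_order all_algebra.
From mathcomp Require Import all_classical all_reals all_analysis.
From mathcomp Require Import ring lra.
Import Order.TTheory GRing.Theory Num.Theory.
Import numFieldNormedType.Exports.
Local Open Scope classical_set_scope.
Local Open Scope ring_scope.

Inductive expr := EZ | E1 | EC of nat | EV of nat | EA of expr & expr
  | EM of expr & expr | EN of expr.

Fixpoint beq (n m : nat) : bool :=
  match n, m with
  | O, O => true
  | S n, S m => beq n m
  | _, _ => false
  end.

Lemma beqE n m : beq n m = (n == m)%N.
Proof. by elim: n m => [|n IH] [|m] //=; rewrite IH eqSS. Qed.

Definition pt (R : realType) := 'rV[R]_4.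

Definition crd {R : realType} (x : pt R) (n : nat) : R :=
  if (n < 4)%N then x ord0 (inord n) else 0.

Fixpoint ev {R : realType} (c : nat -> R) (e : expr) (x : pt R) : R :=
  match e with
  | EZ => 0 | E1 => 1 | EC n => c n | EV n => crd x n
  | EA a b => ev c a x + ev c b x
  | EM a b => ev c a x * ev c b x
  | EN a => - ev c a x
  end.

Definition add (a b : expr) := match a, b with
  | EZ, _ => b | _, EZ => a | _, _ => EA a b end.
Definition mul (a b : expr) := match a, b with
  | EZ, _ => EZ | _, EZ => EZ | E1, _ => b | _, E1 => a | _, _ => EM a b end.
Definition neg (a : expr) := match a with EZ => EZ | EN b => b | _ => EN a end.

Lemma ev_add R c a b x : @ev R c (add a b) x = ev c a x + ev c b x.
Proof. by case: a; case: b => * /=; rewrite ?add0r ?addr0. Qed.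
Lemma ev_mul R c a b x : @ev R c (mul a b) x = ev c a x * ev c b x.
Proof. by case: a; case: b => * /=; rewrite ?mul0r ?mulr0 ?mul1r ?mulr1. Qed.
Lemma ev_neg R c a x : @ev R c (neg a) x = - ev c a x.
Proof. by case: a => * /=; rewrite ?oppr0 ?opprK. Qed.

Fixpoint d (e : expr) (i : nat) : expr :=
  match e with
  | EZ | E1 | EC _ => EZ
  | EV j => if beq i j then E1 else EZ
  | EA a b => add (d a i) (d b i)
  | EM a b => add (mul (d a i) b) (mul a (d b i))
  | EN a => neg (d a i)
  end.

Lemma ev_derive R c e (i : 'I_4) (x : pt R) :
  is_derive x (delta_mx ord0 i : pt R) (ev c e) (ev c (d e i) x).
Proof.
elim: e => [||n|j|a IHa b IHb|a IHa b IHb|a IHa] /=.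
- exact: is_derive_cst.
- exact: is_derive_cst.
- exact: is_derive_cst.
- rewrite beqE.
  case: (ltnP j 4) => hj; last first.
    have -> : (fun y : pt R => crd y j) = cst 0.
      by apply/funext => y; rewrite /crd ltnNge hj.
    have -> : (i == j :> nat) = false by apply/negbTE; rewrite neq_ltn (leq_trans (ltn_ord i) hj).
    exact: is_derive_cst.
  have -> : (fun y : pt R => crd y j) = (fun y : pt R => y ord0 (inord j)).
    by apply/funext => y; rewrite /crd hj.
  have dv : derivable (fun y : pt R => (y : 'M[R]_(1,4))) x (delta_mx ord0 i).
    exact: ex_derive.
  have := derive_mx dv; rewrite derive_val => /matrixP /(_ ord0 (inord j)).
  rewrite !mxE /= => E.
  apply: DeriveDef.
    by move/derivable_mxP: dv => /(_ ord0 (inord j)).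
  rewrite -E.
  have -> : (inord j == i) = (i == j :> nat).
    by rewrite eq_sym -(inj_eq val_inj) /= inordK.
  by case: (i == j :> nat).
- rewrite ev_add; exact: is_deriveD.
- rewrite ev_add !ev_mul.
  change (is_derive x (delta_mx ord0 i : pt R) (ev c a * ev c b)
     (ev c (d a i) x * ev c b x + ev c a x * ev c (d b i) x)).
  apply: (is_derive_eq (is_deriveM IHa IHb)).
  by rewrite addrC; congr (_ + _); apply: mulrC.
- rewrite ev_neg; exact: is_deriveN.
Qed.

Definition Hx : expr :=
  EA (EA (EA (EM (EV 3) (EA (EM (EC 0) (EM (EV 1) (EV 1))) (EM (EC 1) (EM (EV 2) (EV 2)))))
             (EM (EC 2) (EM (EV 1) (EV 1))))
         (EM (EM (EM (EA E1 E1) (EC 3)) (EV 1)) (EV 2)))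
     (EM (EC 4) (EM (EV 2) (EV 2))).

Definition env {R : realType} (a b p q s : R) (n : nat) : R :=
  match n with 0 => a | 1 => b | 2 => p | 3 => q | 4 => s | _ => 2^-1 end.

Lemma ordnat (n : nat) (h : (n < 4)%N) : (n%:R : 'I_4) = inord n.
Proof. by case: n h => [|[|[|[|]]]] // _; apply/val_inj; rewrite /= inordK. Qed.

Lemma Hx_ev (R : realType) (a b p q s : R) x :
  Hfun a b p q s x = ev (env a b p q s) Hx x.
Proof.
rewrite /Hfun /coord /= /crd /= !ordnat //.
Qed.

Definition Gx (i j : nat) : expr :=
  if (beq i 0 && beq j 3) || (beq i 3 && beq j 0) then E1
  else if (beq i 1 && beq j 1) || (beq i 2 && beq j 2) then E1
  else if beq i 3 && beq j 3 then Hx else EZ.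

Definition Gi (k l : nat) : expr :=
  if beq k 0 && beq l 0 then EN Hx
  else if [|| beq k 0 && beq l 3, beq k 3 && beq l 0, beq k 1 && beq l 1 | beq k 2 && beq l 2]
  then E1 else EZ.

Definition sum4 (f : nat -> expr) : expr := add (f 0%N) (add (f 1%N) (add (f 2%N) (f 3%N))).

Lemma ev_sum4 (R : realType) c f (x : pt R) :
  ev c (sum4 f) x = \sum_(l < 4) ev c (f l) x.
Proof. by rewrite /sum4 !ev_add !big_ord_recl big_ord0 addr0. Qed.

Lemma metric_fun (R : realType) (a b p q s : R) (i j : 'I_4) :
  (fun y => metric_ex a b p q s y i j) = ev (env a b p q s) (Gx i j).
Proof.
apply/funext => y; rewrite mxE /Gx !beqE.
by do ?[case: ifP => _]; rewrite /= ?Hx_ev.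
Qed.

Lemma pd_ev (R : realType) c e (i : 'I_4) (x : pt R) :
  pd (ev c e) i x = ev c (d e i) x.
Proof. have H := @ev_derive R c e i x. rewrite /pd. exact: derive_val. Qed.

Lemma pd_metric (R : realType) (a b p q s : R) (i j l : 'I_4) x :
  pd (fun y => metric_ex a b p q s y j l) i x = ev (env a b p q s) (d (Gx j l) i) x.
Proof. by rewrite (@metric_fun R a b p q s j l) pd_ev. Qed.

Lemma inv_metric (R : realType) (a b p q s : R) x :
  invmx (metric_ex a b p q s x) = \matrix_(k < 4, l < 4) ev (env a b p q s) (Gi k l) x.
Proof.
set A := metric_ex _ _ _ _ _ x; set B := \matrix_(k, l) _.
have AB : A *m B = 1%:M.
  apply/matrixP => i j; rewrite !mxE !big_ord_recl big_ord0 !mxE /Gi /=.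
  rewrite Hx_ev.
  by case: i => [[|[|[|[|?]]]] ?] //; case: j => [[|[|[|[|?]]]] ?] //=; ring.
have [uA _] := mulmx1_unit AB.
by rewrite -[invmx A]mulmx1 -AB mulmxA mulVmx // mul1mx.
Qed.

Definition Ce (k i j : nat) : expr :=
  mul (EC 5) (sum4 (fun l => mul (Gi k l)
     (add (add (d (Gx j l) i) (d (Gx i l) j)) (neg (d (Gx i j) l))))).

Definition Re (i j : nat) : expr :=
  add (sum4 (fun k => add (d (Ce k i j) k) (neg (d (Ce k i k) j))))
      (sum4 (fun k => sum4 (fun l =>
          add (mul (Ce k k l) (Ce l i j)) (neg (mul (Ce k j l) (Ce l i k)))))).

Definition Ne (k i j : nat) : expr :=
  add (d (Re i j) k)
   (neg (sum4 (fun l => add (mul (Ce l k i) (Re l j)) (mul (Ce l k j) (Re i l))))).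

Section G.
Variables (R : realType) (a b p q s : R).
Let g := metric_ex a b p q s.
Let c := env a b p q s.

Lemma christ_pt (k i j : 'I_4) x : christoffel g k i j x = ev c (Ce k i j) x.
Proof.
rewrite /christoffel /Ce ev_mul ev_sum4; congr (_ * _).
apply: eq_bigr => l _.
by rewrite inv_metric mxE ev_mul !ev_add ev_neg !pd_metric.
Qed.

Lemma christ_fun (k i j : 'I_4) : christoffel g k i j = ev c (Ce k i j).
Proof. by apply/funext => x; rewrite christ_pt. Qed.

Lemma pd_christ (k i j l : 'I_4) x : pd (christoffel g k i j) l x = ev c (d (Ce k i j) l) x.
Proof. by rewrite christ_fun pd_ev. Qed.

Lemma ricci_pt (i j : 'I_4) x : ricci g i j x = ev c (Re i j) x.
Proof.
rewrite /ricci /Re ev_add !ev_sum4; congr (_ + _).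
  by apply: eq_bigr => k _; rewrite ev_add ev_neg !pd_christ.
apply: eq_bigr => k _; rewrite ev_sum4; apply: eq_bigr => l _.
by rewrite !christ_pt -!ev_mul -ev_neg -ev_add.
Qed.

Lemma ricci_fun (i j : 'I_4) : ricci g i j = ev c (Re i j).
Proof. by apply/funext => x; rewrite ricci_pt. Qed.

Lemma nabla_pt (k i j : 'I_4) x : nabla_ricci g k i j x = ev c (Ne k i j) x.
Proof.
rewrite /nabla_ricci /Ne ev_add ev_neg ev_sum4 ricci_fun pd_ev; congr (_ - _).
apply: eq_bigr => l _.
by rewrite !christ_pt !ricci_pt -!ev_mul -ev_add.
Qed.
End G.

Ltac cmp := match goal with |- context [Ne ?k ?i ?j] =>
  let t := eval vm_compute in (Ne k i j) in
  rewrite (_ : Ne k i j = t); [|by vm_compute] end.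

Theorem mainTheorem3 (R : realType) (U : set 'rV[R]_4) (a b p q s : R) :
  open U -> U !=set0 -> a ^+ 2 + b ^+ 2 != 0 ->
  (classA U (metric_ex a b p q s) <-> b = - a).
Proof.
move=> _ [x0 Ux0] _; split.
  move/(_ x0 Ux0 (@Ordinal 4 3 isT) (@Ordinal 4 3 isT) (@Ordinal 4 3 isT)).
  rewrite !nabla_pt; repeat cmp; rewrite /= => E.
  lra.
move=> hb x _ i j k; rewrite !nabla_pt.
case: i => [[|[|[|[|?]]]] ?] //; case: j => [[|[|[|[|?]]]] ?] //;
  case: k => [[|[|[|[|?]]]] ?] //; repeat cmp; rewrite /= ?hb; lra.
Qed.
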